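(* Let $q \geq 1$ and let $k$ be a positive integer with $k < n$. Let $\boldsymbol{B}$ be a dictionary as described in the context, and assume that every signal $\boldsymbol{y}\in\mathbb{R}^D$ that admits a $k$-block-sparse representation admits a unique one. If $$(2k-1)\,\mu_S < \frac{1-\epsilon'_q}{1+\epsilon'_q},$$ then for every $\Lambda_k\subseteq\{1,\dots,n\}$ with $|\Lambda_k|=k$ and every $\boldsymbol{y}\in\bigoplus_{i\in\Lambda_k}\mathcal{S}_i$, every optimal solution $\boldsymbol{c}^*$ of $P'_{\ell_q/\ell_1}(\boldsymbol{y})$ satisfies $\boldsymbol{B}[i]\boldsymbol{c}^*[i]=\boldsymbol{0}$ for all $i\notin\Lambda_k$; i.e. the solution of $P'_{\ell_q/\ell_1}$ is equivalent to that of $P'_{\ell_q/\ell_0}$.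
   Context: $\boldsymbol{B} = [\boldsymbol{B}[1]\ \cdots\ \boldsymbol{B}[n]] \in \mathbb{R}^{D\times N}$ has unit-Euclidean-norm columns, blocks $\boldsymbol{B}[i] \in \mathbb{R}^{D\times m_i}$ (possibly with linearly dependent columns); $\mathcal{S}_i = \operatorname{span}(\boldsymbol{B}[i])$, and $\mathcal{S}_i\cap\mathcal{S}_j = \{0\}$ for $i\ne j$. Vectors $\boldsymbol{c}\in\mathbb{R}^N$ are written $(\boldsymbol{c}[1];\dots;\boldsymbol{c}[n])$, $\boldsymbol{c}[i]\in\mathbb{R}^{m_i}$. A $k$-block-sparse representation of $\boldsymbol{y}$ is $\boldsymbol{y}=\sum_{i\in\Lambda}\boldsymbol{s}_i$ with $|\Lambda|\le k$, $\boldsymbol{s}_i\in\mathcal{S}_i\setminus\{0\}$; uniqueness means any two have the same $\Lambda$ and the same $\boldsymbol{s}_i$. $P'_{\ell_q/\ell_1}(\boldsymbol{y})$: $\min\sum_i\|\boldsymbol{B}[i]\boldsymbol{c}[i]\|_q$ s.t. $\boldsymbol{y}=\boldsymbol{B}\boldsymbol{c}$; $P'_{\ell_q/\ell_0}(\boldsymbol{y})$: minimize $\#\{i:\boldsymbol{B}[i]\boldsymbol{c}[i]\ne 0\}$ s.t. $\boldsymbol{y}=\boldsymbol{B}\boldsymbol{c}$. Subspace coherence: $\mu(\mathcal{S}_i,\mathcal{S}_j)=\max_{0\ne\boldsymbol{x}\in\mathcal{S}_i,\,0\ne\boldsymbol{z}\in\mathcal{S}_j}\frac{|\boldsymbol{x}^\top\boldsymbol{z}|}{\|\boldsymbol{x}\|_2\|\boldsymbol{z}\|_2}$;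 $\mu_S=\max_{i\ne j}\mu(\mathcal{S}_i,\mathcal{S}_j)$. $\epsilon'_q$: the smallest constant such that $(1-\epsilon'_q)\|\boldsymbol{B}[i]\boldsymbol{c}[i]\|_q^2\le\|\boldsymbol{B}[i]\boldsymbol{c}[i]\|_2^2\le(1+\epsilon'_q)\|\boldsymbol{B}[i]\boldsymbol{c}[i]\|_q^2$ for all $i$ and all $\boldsymbol{c}[i]$. *)

(* Defs.v *)
From HB Require Import structures.
From mathcomp Require Import all_boot all_order all_algebra.
From mathcomp Require Import all_classical all_reals.
From mathcomp Require Import exp.
Set Implicit Arguments. Unset Strict Implicit. Unset Printing Implicit Defensive.
Import Order.TTheory GRing.Theory Num.Theory.
Local Open Scope ring_scope.
Local Open Scope classical_set_scope.

Section BlockDefs.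
Variable R : realType.

Definition l2norm (D : nat) (v : 'cV[R]_D) : R :=
  Num.sqrt (\sum_(j < D) v j 0 ^+ 2).

Definition lqnorm (q : R) (D : nat) (v : 'cV[R]_D) : R :=
  (\sum_(j < D) `|v j 0| `^ q) `^ q^-1.

Definition in_span (D m : nat) (M : 'M[R]_(D, m)) (x : 'cV[R]_D) : Prop :=
  exists c : 'cV[R]_m, x = M *m c.

Definition subspace_coherence (D mi mj : nat)
  (Bi : 'M[R]_(D, mi)) (Bj : 'M[R]_(D, mj)) : R :=
  sup [set r : R | exists (x z : 'cV[R]_D),
        [/\ in_span Bi x, in_span Bj z, x != 0, z != 0 &
            r = `|(x^T *m z) 0 0| / (l2norm x * l2norm z)]].

Definition muS (D n : nat) (m : 'I_n -> nat) (B : forall i, 'M[R]_(D, m i)) : R :=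
  \big[Num.max/0]_(ij : 'I_n * 'I_n | ij.1 != ij.2)
     subspace_coherence (B ij.1) (B ij.2).

Definition eps_q (q : R) (D n : nat) (m : 'I_n -> nat)
  (B : forall i, 'M[R]_(D, m i)) : R :=
  inf [set e : R | forall (i : 'I_n) (ci : 'cV[R]_(m i)),
        (1 - e) * lqnorm q (B i *m ci) ^+ 2 <= l2norm (B i *m ci) ^+ 2 /\
        l2norm (B i *m ci) ^+ 2 <= (1 + e) * lqnorm q (B i *m ci) ^+ 2].

Definition kbs_rep (D n : nat) (m : 'I_n -> nat) (B : forall i, 'M[R]_(D, m i))
  (k : nat) (y : 'cV[R]_D) (Lam : {set 'I_n}) (s : 'I_n -> 'cV[R]_D) : Prop :=
  [/\ (#|Lam| <= k)%N,
      (forall i, i \in Lam -> in_span (B i) (s i) /\ s i != 0) &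
      y = \sum_(i in Lam) s i].

Definition kbs_unique (D n : nat) (m : 'I_n -> nat) (B : forall i, 'M[R]_(D, m i))
  (k : nat) : Prop :=
  forall (y : 'cV[R]_D) Lam s Lam' s',
    kbs_rep B k y Lam s -> kbs_rep B k y Lam' s' ->
    Lam = Lam' /\ (forall i, i \in Lam -> s i = s' i).

Definition in_block_sum (D n : nat) (m : 'I_n -> nat) (B : forall i, 'M[R]_(D, m i))
  (Lam : {set 'I_n}) (y : 'cV[R]_D) : Prop :=
  exists s : 'I_n -> 'cV[R]_D,
    (forall i, i \in Lam -> in_span (B i) (s i)) /\ y = \sum_(i in Lam) s i.

Definition feasible (D n : nat) (m : 'I_n -> nat) (B : forall i, 'M[R]_(D, m i))
  (y : 'cV[R]_D) (c : forall i, 'cV[R]_(m i)) : Prop :=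
  y = \sum_(i < n) B i *m c i.

Definition lq_l1_obj (q : R) (D n : nat) (m : 'I_n -> nat)
  (B : forall i, 'M[R]_(D, m i)) (c : forall i, 'cV[R]_(m i)) : R :=
  \sum_(i < n) lqnorm q (B i *m c i).

Definition lq_l1_optimal (q : R) (D n : nat) (m : 'I_n -> nat)
  (B : forall i, 'M[R]_(D, m i)) (y : 'cV[R]_D) (c : forall i, 'cV[R]_(m i)) : Prop :=
  feasible B y c /\
  forall c' : forall i, 'cV[R]_(m i), feasible B y c' ->
    lq_l1_obj q B c <= lq_l1_obj q B c'.

End BlockDefs.

(* Main.v *)
Require Import Defs.
From HB Require Import structures.
From mathcomp Require Import all_boot all_order all_algebra.
From mathcomp Require Import all_classical all_reals.
From mathcomp Require Import exp.
From mathcomp Require Import interval_inference convex hoelder.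
From mathcomp Require Import ring lra.
Import Order.TTheory GRing.Theory Num.Theory.
Set Implicit Arguments. Unset Strict Implicit.
Local Open Scope ring_scope.

Lemma powR_convex (R : realType) (p t x y : R) : 1 <= p -> 0 <= t -> t <= 1 ->
  0 <= x -> 0 <= y ->
  (t * x + (1 - t) * y) `^ p <= t * x `^ p + (1 - t) * y `^ p.
Proof.
move=> p1 t0 t1 x0 y0.
have := @convex_powR R p p1 (Itv01 t0 t1) x y.
rewrite !convRE /=. apply.
- by rewrite inE /= in_itv /= andbT.
- by rewrite inE /= in_itv /= andbT.
Qed.

Lemma powRK (R : realType) (a q : R) : 0 <= a -> 0 < q -> (a `^ q) `^ q^-1 = a.
Proof. by move=> a0 q0; rewrite -powRrM mulfV ?gt_eqF // powRr1. Qed.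

Lemma powRKV (R : realType) (a q : R) : 0 <= a -> 0 < q -> (a `^ q^-1) `^ q = a.
Proof. by move=> a0 q0; rewrite -powRrM mulVf ?gt_eqF // powRr1. Qed.

Lemma lq_ge0 (R : realType) (q : R) D (v : 'cV[R]_D) : 0 <= lqnorm q v.
Proof. exact: powR_ge0. Qed.

Lemma lqN (R : realType) (q : R) D (v : 'cV[R]_D) : lqnorm q (- v) = lqnorm q v.
Proof. by rewrite /lqnorm; congr (_ `^ _); apply: eq_bigr => j _; rewrite mxE normrN. Qed.

Lemma lq_coord (R : realType) (q : R) D (v : 'cV[R]_D) j : 0 < q ->
  `|v j 0| <= lqnorm q v.
Proof.
move=> q0; rewrite /lqnorm -{1}(@powRK R `|v j 0| q) //.
apply: ge0_ler_powR.
- by rewrite invr_ge0 ltW.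
- by rewrite nnegrE powR_ge0.
- by rewrite nnegrE sumr_ge0 // => i _; apply: powR_ge0.
rewrite (bigD1 j) //= lerDl; apply: sumr_ge0 => i _; exact: powR_ge0.
Qed.

Lemma lq_eq0 (R : realType) (q : R) D (v : 'cV[R]_D) : 0 < q ->
  lqnorm q v = 0 -> v = 0.
Proof.
move=> q0 h; apply/matrixP => j k; rewrite (ord1 k) mxE.
apply/normr0_eq0/eqP; rewrite eq_le normr_ge0 andbT -h; exact: lq_coord.
Qed.

Lemma lq_pow (R : realType) (q : R) D (v : 'cV[R]_D) : 0 < q ->
  lqnorm q v `^ q = \sum_(j < D) `|v j 0| `^ q.
Proof.
move=> q0; rewrite /lqnorm powRKV //; apply: sumr_ge0 => i _; exact: powR_ge0.
Qed.

Lemma lq_triangle (R : realType) (q : R) D (u v : 'cV[R]_D) : 1 <= q ->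
  lqnorm q (u + v) <= lqnorm q u + lqnorm q v.
Proof.
move=> q1; have q0 : 0 < q by apply: lt_le_trans q1.
have [Ae|Apos] := eqVneq (lqnorm q u) 0.
  by rewrite Ae add0r (lq_eq0 q0 Ae) add0r lexx.
have [Be|Bpos] := eqVneq (lqnorm q v) 0.
  by rewrite Be addr0 (lq_eq0 q0 Be) addr0 lexx.
have Ap : 0 < lqnorm q u by rewrite lt_neqAle eq_sym Apos lq_ge0.
have Bp : 0 < lqnorm q v by rewrite lt_neqAle eq_sym Bpos lq_ge0.
move: Ap Bp (lq_pow u q0) (lq_pow v q0).
move: (lqnorm q u) (lqnorm q v) => A Bv Ap Bp hA hB.
have S0 : 0 < A + Bv by rewrite addr_gt0.
have sx : forall (w : 'cV[R]_D) (W : R), 0 < W -> W `^ q = \sum_(j < D) `|w j 0| `^ q ->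
    \sum_(j < D) (`|w j 0| / W) `^ q = 1.
  move=> w W Wp hW.
  have Wq : 0 < W `^ q by apply: powR_gt0.
  transitivity (\sum_(j < D) `|w j 0| `^ q / W `^ q).
    apply: eq_bigr => j _.
    rewrite powRM ?normr_ge0 ?invr_ge0 ?(ltW Wp) //; congr (_ * _).
    apply: (@mulIf _ (W `^ q)); first by rewrite gt_eqF.
    by rewrite -powRM ?invr_ge0 ?ltW // mulVf ?gt_eqF // powR1 mulVf // gt_eqF.
  by rewrite -mulr_suml -hW divff // gt_eqF.
have l0 : 0 <= A / (A + Bv) by rewrite divr_ge0 // ltW.
have l1 : A / (A + Bv) <= 1 by rewrite ler_pdivrMr // mul1r lerDl ltW.
have e1 : 1 - A / (A + Bv) = Bv / (A + Bv).
  apply: (@mulIf _ (A+Bv)); first by rewrite gt_eqF.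
  rewrite mulrBl !divfK ?gt_eqF // mul1r; lra.
have key : forall j, `|(u + v) j 0| `^ q <=
    (A + Bv) `^ q * (A / (A + Bv) * (`|u j 0| / A) `^ q +
                    (1 - A / (A + Bv)) * (`|v j 0| / Bv) `^ q).
  move=> j.
  have w0 : 0 <= A / (A + Bv) * (`|u j 0| / A) + (1 - A / (A + Bv)) * (`|v j 0| / Bv).
    by rewrite addr_ge0 // mulr_ge0 ?subr_ge0 // divr_ge0 // ltW.
  have h1 : `|(u + v) j 0| <= (A + Bv) * (A / (A + Bv) * (`|u j 0| / A) + (1 - A / (A + Bv)) * (`|v j 0| / Bv)).
    rewrite e1 mxE; apply: le_trans (ler_normD _ _) _.
    rewrite le_eqVlt; apply/orP; left; apply/eqP.
    by field; rewrite (gt_eqF Bp) (gt_eqF S0) (gt_eqF Ap).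
  apply: le_trans (_ : ((A + Bv) * (A / (A + Bv) * (`|u j 0| / A) + (1 - A / (A + Bv)) * (`|v j 0| / Bv))) `^ q <= _).
    apply: (ge0_ler_powR (ltW q0)) => //; rewrite nnegrE //.
    exact: mulr_ge0 (ltW S0) w0.
  rewrite powRM ?(ltW S0) //.
  apply: ler_wpM2l; first exact: powR_ge0.
  by apply: powR_convex => //; rewrite divr_ge0 // ltW.
have hs : \sum_(j < D) `|(u + v) j 0| `^ q <= (A + Bv) `^ q.
  apply: le_trans (ler_sum _ (fun j _ => key j)) _.
  rewrite -mulr_sumr big_split /= -!mulr_sumr (sx u A) // (sx v Bv) //.
  by rewrite !mulr1 subrKC mulr1.
rewrite /lqnorm -[X in _ <= X](@powRK _ (A + Bv) q) ?(ltW S0) //.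
have qi : 0 <= q^-1 by rewrite invr_ge0 (ltW q0).
apply: (ge0_ler_powR qi) => //; rewrite nnegrE ?powR_ge0 //.
by apply: sumr_ge0 => i _; apply: powR_ge0.
Qed.
Definition ip (R : realType) D (x z : 'cV[R]_D) : R := (x^T *m z) 0 0.

Lemma ipE (R : realType) D (x z : 'cV[R]_D) : ip x z = \sum_(j < D) x j 0 * z j 0.
Proof. by rewrite /ip mxE; apply: eq_bigr => j _; rewrite mxE. Qed.

Lemma ipC (R : realType) D (x z : 'cV[R]_D) : ip x z = ip z x.
Proof. by rewrite !ipE; apply: eq_bigr => j _; rewrite mulrC. Qed.

Lemma ip_sumr (R : realType) D (I : finType) (P : pred I) (x : 'cV[R]_D) (F : I -> 'cV[R]_D) :
  ip x (\sum_(i | P i) F i) = \sum_(i | P i) ip x (F i).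
Proof. by rewrite /ip mulmx_sumr summxE. Qed.

Lemma l2_ge0 (R : realType) D (v : 'cV[R]_D) : 0 <= l2norm v.
Proof. exact: sqrtr_ge0. Qed.

Lemma sumsq_ge0 (R : realType) D (v : 'cV[R]_D) : 0 <= \sum_(j < D) v j 0 ^+ 2.
Proof. by apply: sumr_ge0 => j _; apply: sqr_ge0. Qed.

Lemma l2_sq (R : realType) D (v : 'cV[R]_D) : l2norm v ^+ 2 = ip v v.
Proof.
rewrite /l2norm sqr_sqrtr ?sumsq_ge0 // ipE.
by apply: eq_bigr => j _; rewrite expr2.
Qed.

Lemma l2_eq0 (R : realType) D (v : 'cV[R]_D) : l2norm v = 0 -> v = 0.
Proof.
move=> /eqP; rewrite sqrtr_eq0 => h.
have h0 : \sum_(j < D) v j 0 ^+ 2 = 0 by apply/eqP; rewrite eq_le h sumsq_ge0.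
apply/matrixP => j k; rewrite (ord1 k) mxE.
have := psumr_eq0P (P := xpredT) (fun i _ => sqr_ge0 (v i 0)) h0 (i:=j) isT.
by move/eqP; rewrite sqrf_eq0 => /eqP.
Qed.

Lemma l2_gt0 (R : realType) D (v : 'cV[R]_D) : v != 0 -> 0 < l2norm v.
Proof.
move=> v0; rewrite lt_neqAle l2_ge0 andbT eq_sym; apply/eqP => /l2_eq0 h.
by rewrite h eqxx in v0.
Qed.

Lemma l2_le_lq (R : realType) (q : R) D (v : 'cV[R]_D) : 0 < q ->
  l2norm v ^+ 2 <= D%:R * lqnorm q v ^+ 2.
Proof.
move=> q0; rewrite /l2norm sqr_sqrtr ?sumsq_ge0 //.
have -> : D%:R * lqnorm q v ^+ 2 = \sum_(j < D) lqnorm q v ^+ 2.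
  by rewrite sumr_const card_ord mulr_natl.
apply: ler_sum => j _.
rewrite -real_normK ?num_real //.
have h := lq_coord v j q0.
have h0 := normr_ge0 (v j 0).
nra.
Qed.

Lemma cauchy_schwarz (R : realType) D (x z : 'cV[R]_D) :
  `|ip x z| <= l2norm x * l2norm z.
Proof.
rewrite /l2norm -sqrtrM ?sumsq_ge0 // -sqrtr_sqr ler_sqrt; last first.
  by rewrite mulr_ge0 ?sumsq_ge0.
rewrite ipE.
move: (sumsq_ge0 x) (sumsq_ge0 z).
set a := \sum_(j < D) x j 0 ^+ 2; set c := \sum_(j < D) z j 0 ^+ 2.
set s := \sum_(j < D) x j 0 * z j 0 => a0 c0.
have key : 0 <= a * (a * c - s ^+ 2).
  have -> : a * (a * c - s ^+ 2) = \sum_(j < D) (a * z j 0 - s * x j 0) ^+ 2.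
    transitivity (\sum_(j < D) (a ^+ 2 * z j 0 ^+ 2 - (2 * a * s) * (x j 0 * z j 0) + s ^+ 2 * x j 0 ^+ 2)).
      rewrite big_split sumrB /= -!mulr_sumr -/a -/c -/s; ring.
    by apply: eq_bigr => j _; ring.
  by apply: sumr_ge0 => j _; apply: sqr_ge0.
have [a0'|apos] := eqVneq a 0.
  have xs : forall j, x j 0 = 0.
    move=> j; have := psumr_eq0P (P := xpredT) (fun i _ => sqr_ge0 (x i 0)) a0' (i:=j) isT.
    by move/eqP; rewrite sqrf_eq0 => /eqP.
  have -> : s = 0 by rewrite /s big1 // => j _; rewrite xs mul0r.
  by rewrite expr2 mul0r mulr_ge0.
have ap : 0 < a by rewrite lt_neqAle eq_sym apos a0.
rewrite pmulr_rge0 // subr_ge0 in key.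
exact: key.
Qed.

Local Open Scope classical_set_scope.

Lemma inf_closed (R : realType) (S : set R) (A b : R) :
  S !=set0 -> 0 <= A -> 0 <= b ->
  (forall e, S e -> (1 - e) * A <= b /\ b <= (1 + e) * A) ->
  (1 - inf S) * A <= b /\ b <= (1 + inf S) * A.
Proof.
move=> S0 A0 b0 hS; split.
  rewrite leNgt; apply/negP => hlt.
  have Ap : 0 < A.
    rewrite lt_neqAle A0 andbT; apply/eqP => hA; move: hlt; rewrite -hA mulr0.
    by rewrite ltNge b0.
  have : inf S < 1 - b / A by rewrite ltrBrDl -ltrBrDr ltr_pdivrMr.
  case/(inf_lt S0) => e Se elt.
  have [h1 _] := hS e Se.
  have : b < (1 - e) * A by rewrite -ltr_pdivrMr // ltrBrDl -ltrBrDr.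
  by rewrite ltNge h1.
rewrite leNgt; apply/negP => hlt.
case: S0 => e0 Se0.
have [A0'|Ap] := eqVneq A 0.
  have [_ h2] := hS e0 Se0; move: hlt h2; rewrite A0' !mulr0 => hlt h2.
  by move: hlt; rewrite ltNge h2.
have Ap' : 0 < A by rewrite lt_neqAle eq_sym Ap A0.
have : inf S < b / A - 1 by rewrite ltrBrDr addrC ltr_pdivlMr.
case/(inf_lt (ex_intro _ e0 Se0)) => e Se elt.
have [_ h2] := hS e Se.
have : (1 + e) * A < b by rewrite -ltr_pdivlMr // addrC -ltrBrDr.
by rewrite ltNge h2.
Qed.

Lemma muS_ge0 (R : realType) D n (m : 'I_n -> nat) (B : forall i, 'M[R]_(D, m i)) :
  0 <= muS B.
Proof. exact: bigmax_ge_id. Qed.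

Lemma coh_bound (R : realType) D n (m : 'I_n -> nat) (B : forall i, 'M[R]_(D, m i))
  (i j : 'I_n) (x z : 'cV[R]_D) : i != j -> in_span (B i) x -> in_span (B j) z ->
  `|ip x z| <= muS B * l2norm x * l2norm z.
Proof.
move=> ij hx hz.
have [->|x0] := eqVneq x 0.
  rewrite ipE big1 ?normr0 ?mulr_ge0 ?muS_ge0 ?l2_ge0 // => k _; by rewrite mxE mul0r.
have [->|z0] := eqVneq z 0.
  rewrite ipE big1 ?normr0 ?mulr_ge0 ?muS_ge0 ?l2_ge0 // => k _; by rewrite mxE mulr0.
have px := l2_gt0 x0; have pz := l2_gt0 z0.
have pxz : 0 < l2norm x * l2norm z by rewrite mulr_gt0.
rewrite -mulrA -ler_pdivrMr //.
apply: le_trans (_ : subspace_coherence (B i) (B j) <= _).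
  apply: ub_le_sup.
    exists 1 => r [x' [z' [hx' hz' x0' z0' ->]]].
    have p' : 0 < l2norm x' * l2norm z' by rewrite mulr_gt0 ?l2_gt0.
    rewrite ler_pdivrMr // mul1r; exact: cauchy_schwarz.
  by exists x, z.
exact: (@le_bigmax_cond _ _ _ 0 (i, j) (fun ij : 'I_n * 'I_n => ij.1 != ij.2) (fun ij => subspace_coherence (B ij.1) (B ij.2)) ij).
Qed.


Lemma final_alg (R:realType) (K mu e al be : R) : 1 <= K -> 0 <= mu -> 0 <= e ->
  al ^+ 2 = 1 - e -> be ^+ 2 = 1 + e -> 0 < al -> 0 <= be ->
  (2 * K - 1) * mu * (1 + e) < 1 - e -> (1 + mu - K * mu) * al <= K * mu * be -> False.
Proof.
move=> K1 mu0 e0 ha hb al0 be0 hc h.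
have albe : al <= be.
  rewrite -ler_sqr ?nnegrE ?(ltW al0) // ha hb; lra.
have [X0|X0] := lerP 0 (1 + mu - K * mu).
  have h2 : (1 + mu - K * mu) * al * be <= K * mu * be ^+ 2.
    rewrite expr2 mulrA; apply: ler_wpM2r => //.
  have h3 : (1 + mu - K * mu) * al ^+ 2 <= (1 + mu - K * mu) * al * be.
    rewrite expr2 mulrA; apply: ler_wpM2l => //; apply: mulr_ge0 => //; exact: ltW.
  have h4 : (K - 1) * mu * al ^+ 2 <= (K - 1) * mu * be ^+ 2.
    apply: ler_wpM2l; first by apply: mulr_ge0 => //; lra.
    rewrite ha hb; lra.
  rewrite ha hb in h2 h3 h4.
  nra.
have h5 : 1 < K * mu - mu by lra.
have h6 : 1 < (2 * K - 1) * mu by nra.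
nra.
Qed.

Lemma sqrt_le1 (R : realType) (t x y : R) : 0 <= t -> 0 <= x -> 0 <= y ->
  t * x ^+ 2 <= y ^+ 2 -> Num.sqrt t * x <= y.
Proof.
move=> t0 x0 y0 h.
have -> : Num.sqrt t * x = Num.sqrt (t * x ^+ 2) by rewrite sqrtrM // sqrtr_sqr ger0_norm.
rewrite -[X in _ <= X](ger0_norm y0) -sqrtr_sqr.
by rewrite ler_sqrt // sqr_ge0.
Qed.

Lemma sqrt_le2 (R : realType) (t x y : R) : 0 <= t -> 0 <= x -> 0 <= y ->
  y ^+ 2 <= t * x ^+ 2 -> y <= Num.sqrt t * x.
Proof.
move=> t0 x0 y0 h.
have -> : Num.sqrt t * x = Num.sqrt (t * x ^+ 2) by rewrite sqrtrM // sqrtr_sqr ger0_norm.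
rewrite -[X in X <= _](ger0_norm y0) -sqrtr_sqr.
by rewrite ler_sqrt // mulr_ge0 // sqr_ge0.
Qed.

Lemma lq0 (R : realType) (q : R) D : 0 < q -> lqnorm q (0 : 'cV[R]_D) = 0.
Proof.
move=> q0; rewrite /lqnorm big1 => [|j _]; last by rewrite mxE normr0 powR0 // gt_eqF.
by rewrite powR0 // invr_neq0 // gt_eqF.
Qed.

Lemma eps_props (R : realType) (q : R) D n (m : 'I_n -> nat) (B : forall i, 'M[R]_(D, m i)) :
  0 < q -> forall i (ci : 'cV[R]_(m i)),
  (1 - eps_q q B) * lqnorm q (B i *m ci) ^+ 2 <= l2norm (B i *m ci) ^+ 2 /\
  l2norm (B i *m ci) ^+ 2 <= (1 + eps_q q B) * lqnorm q (B i *m ci) ^+ 2.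
Proof.
move=> q0 i ci; rewrite /eps_q; apply: inf_closed; last 3 first.
- exact: sqr_ge0.
- exact: sqr_ge0.
- by move=> e He; apply: He.
exists (D%:R + 1) => i' ci'.
have h := l2_le_lq (B i' *m ci') q0.
have h1 := sqr_ge0 (lqnorm q (B i' *m ci')).
have h2 := sqr_ge0 (l2norm (B i' *m ci')).
have D0 : 0 <= D%:R :> R by [].
split; nra.
Qed.

Lemma nsp_step (R : realType) (ai T' mu s : R) : 0 <= ai -> 0 <= T' -> 0 <= mu ->
  ai ^+ 2 = - s -> - s <= mu * ai * T' -> (1 + mu) * ai <= mu * (ai + T').
Proof.
move=> a0 T0 m0 h1 h2.
have h3 : ai <= mu * T'.
  have [->|ap] := eqVneq ai 0; first by rewrite mulr_ge0.
  have ap' : 0 < ai by rewrite lt_neqAle eq_sym ap a0.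
  rewrite -(ler_pM2l ap') -expr2 h1; apply: le_trans h2 _.
  by rewrite mulrCA mulrA.
nra.
Qed.

Lemma ip0r (R : realType) D (x : 'cV[R]_D) : ip x 0 = 0.
Proof. by rewrite ipE big1 // => j _; rewrite mxE mulr0. Qed.

Lemma final_step (R : realType) (K mu e SL SC PL PC : R) : 1 <= K -> 0 <= mu -> 0 <= e ->
  e < 1 -> (2 * K - 1) * mu * (1 + e) < 1 - e ->
  (1 + mu) * SL <= K * mu * (SL + SC) -> PC <= PL ->
  Num.sqrt (1 - e) * PL <= SL -> SC <= Num.sqrt (1 + e) * PC ->
  0 <= SC -> 0 <= PC -> SC <= 0.
Proof.
move=> K1 mu0 e0 e1 hc HS Hb H3 H4 SC0 PC0.
rewrite leNgt; apply/negP => SCp.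
have alp : 0 < Num.sqrt (1 - e) by rewrite sqrtr_gt0 subr_gt0.
have bep : 0 < Num.sqrt (1 + e) by rewrite sqrtr_gt0; lra.
have PCp : 0 < PC.
  rewrite lt_neqAle PC0 andbT; apply/eqP => h; move: H4; rewrite -h mulr0 => H4.
  by move: SCp; rewrite ltNge H4.
have PLp : 0 < PL by apply: lt_le_trans PCp Hb.
have M0 : 0 <= K * mu by rewrite mulr_ge0 //; lra.
have key : (1 + mu - K * mu) * Num.sqrt (1 - e) <= K * mu * Num.sqrt (1 + e).
  have [X0|X0] := lerP (1 + mu - K * mu) 0.
    apply: (@le_trans _ _ 0); last by rewrite mulr_ge0 // ltW.
    by rewrite mulr_le0_ge0 // ltW.
  rewrite -(ler_pM2r PLp).
  have s1 : (1 + mu - K * mu) * (Num.sqrt (1 - e) * PL) <= (1 + mu - K * mu) * SL.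
    by apply: ler_wpM2l => //; apply: ltW.
  have s2 : (1 + mu - K * mu) * SL <= K * mu * SC by lra.
  have s3 : K * mu * SC <= K * mu * (Num.sqrt (1 + e) * PC) by apply: ler_wpM2l.
  have s4 : K * mu * (Num.sqrt (1 + e) * PC) <= K * mu * (Num.sqrt (1 + e) * PL).
    by apply: ler_wpM2l => //; apply: ler_wpM2l => //; apply: ltW.
  have := le_trans s1 (le_trans s2 (le_trans s3 s4)).
  by rewrite !mulrA.
apply: (@final_alg R K mu e (Num.sqrt (1 - e)) (Num.sqrt (1 + e))) => //.
- by rewrite sqr_sqrtr // subr_ge0 ltW.
- by rewrite sqr_sqrtr //; lra.
Qed.

Local Close Scope classical_set_scope.
Unset Implicit Arguments.

Theorem corollary3 (R : realType) (D n : nat) (m : 'I_n -> nat)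
  (B : forall i : 'I_n, 'M[R]_(D, m i)) (q : R) (k : nat)
  (hq : 1 <= q) (hk0 : (0 < k)%N) (hkn : (k < n)%N)
  (hunit : forall (i : 'I_n) (j : 'I_(m i)), l2norm (col j (B i)) = 1)
  (hdisj : forall (i j : 'I_n) (x : 'cV[R]_D), i != j ->
             in_span (B i) x -> in_span (B j) x -> x = 0)
  (huniq : kbs_unique B k)
  (hcoh : (2 * k - 1)%:R * muS B < (1 - eps_q q B) / (1 + eps_q q B)) :
  forall (Lam : {set 'I_n}) (y : 'cV[R]_D),
    #|Lam| = k -> in_block_sum B Lam y ->
    forall c : forall i : 'I_n, 'cV[R]_(m i),
      lq_l1_optimal q B y c ->
      forall i : 'I_n, i \notin Lam -> B i *m c i = 0.
Proof.
move=> Lam y hcard [s [hs ys]] c [hfeas hopt] i0 hi0.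
have q0 : 0 < q by apply: lt_le_trans ltr01 hq.
have [allz|notallz] := pselect (forall i (ci : 'cV[R]_(m i)), B i *m ci = 0).
  by apply: allz.
move/existsNP: notallz => [i1 /existsNP [c1 /eqP nz1]].
have hE := eps_props B q0.
have mu0 := muS_ge0 B.
have hK : (2 * k - 1)%:R = 2 * k%:R - 1 :> R.
  by rewrite natrB ?muln_gt0 // natrM.
rewrite hK in hcoh.
have K1 : 1 <= k%:R :> R by rewrite ler1n.
move: hcoh hE; move: (eps_q q B) => e hcoh hE.
move: hcoh mu0; move: (muS B) (@coh_bound R D n m B) => mu hcohb hcoh mu0.
have e0 : 0 <= e.
  have [h1 h2] := hE i1 c1.
  have lp : 0 < lqnorm q (B i1 *m c1).
    rewrite lt_neqAle lq_ge0 andbT eq_sym; apply/eqP => /(lq_eq0 q0) h.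
    by rewrite h eqxx in nz1.
  have lp2 : 0 < lqnorm q (B i1 *m c1) ^+ 2 by rewrite exprn_gt0.
  nra.
have e1p : 0 < 1 + e by lra.
have hc2 : (2 * k%:R - 1) * mu * (1 + e) < 1 - e by rewrite -ltr_pdivlMr.
have hm0 : 0 <= (2 * k%:R - 1) * mu by rewrite mulr_ge0 //; lra.
have e1 : e < 1 by nra.
have le1 : 0 <= 1 - e by rewrite subr_ge0 ltW.
have le2 : 0 <= 1 + e by rewrite addr_ge0 // ler01.
have hw : forall i, exists w : 'cV[R]_(m i), i \in Lam -> s i = B i *m w.
  move=> i; case: (boolP (i \in Lam)) => hi; last by exists 0.
  by have [w ->] := hs i hi; exists w.
pose w i := projT1 (cid (hw i)).
have wP : forall i, i \in Lam -> s i = B i *m w i := fun i => projT2 (cid (hw i)).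
have [c' c'E] : {c' : forall i, 'cV[R]_(m i) | forall i, c' i = if i \in Lam then w i else 0}.
  by exists (fun i => if i \in Lam then w i else 0).
have Bc'L : forall i, i \in Lam -> B i *m c' i = s i.
  by move=> i hi; rewrite c'E hi wP.
have Bc'N : forall i, i \notin Lam -> B i *m c' i = 0.
  by move=> i hi; rewrite c'E (negbTE hi) mulmx0.
have feas' : feasible B y c'.
  rewrite /feasible ys [RHS](bigID (fun i => i \in Lam)) /=.
  rewrite [X in _ = _ + X]big1 ?addr0; last by move=> i hi; rewrite Bc'N.
  by apply: eq_bigr => i hi; rewrite Bc'L.
have objle := hopt c' feas'.
have [d dE] : {d : 'I_n -> 'cV[R]_D | forall i, d i = B i *m c i - B i *m c' i}.
  by exists (fun i => B i *m c i - B i *m c' i).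
have hdspan : forall i, in_span (B i) (d i).
  by move=> i; exists (c i - c' i); rewrite mulmxBr dE.
have dN : forall i, i \notin Lam -> d i = B i *m c i.
  by move=> i hi; rewrite dE Bc'N // subr0.
have sumd : \sum_i d i = 0.
  by rewrite (eq_bigr _ (fun i _ => dE i)) sumrB -hfeas -feas' subrr.
have L1 : lq_l1_obj q B c = \sum_(i in Lam) lqnorm q (B i *m c i) + \sum_(i | i \notin Lam) lqnorm q (d i).
  have E2 : \sum_(i | i \notin Lam) lqnorm q (B i *m c i) = \sum_(i | i \notin Lam) lqnorm q (d i).
    apply: eq_bigr => i hi. rewrite (dN i hi). reflexivity.
  rewrite /lq_l1_obj [LHS](bigID (fun i => i \in Lam)).
  rewrite /=.
  exact: (congr1 (fun x => _ + x) E2).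
have L2 : lq_l1_obj q B c' = \sum_(i in Lam) lqnorm q (B i *m c' i).
  have E0 : \sum_(i | i \notin Lam) lqnorm q (B i *m c' i) = 0.
    apply: big1 => i hi. rewrite (Bc'N i hi). exact: lq0.
  rewrite /lq_l1_obj [LHS](bigID (fun i => i \in Lam)).
  rewrite /= E0 addr0.
  reflexivity.
have h2 : \sum_(i in Lam) lqnorm q (B i *m c' i) <=
          \sum_(i in Lam) (lqnorm q (B i *m c i) + lqnorm q (d i)).
  apply: ler_sum => i hi.
  have -> : B i *m c' i = B i *m c i + - d i by rewrite dE opprB addrC subrK.
  rewrite -(lqN q (d i)).
  apply: lq_triangle.
  exact: hq.
rewrite big_split /= in h2.
rewrite L1 L2 in objle.
have Hb : \sum_(i | i \notin Lam) lqnorm q (d i) <= \sum_(i in Lam) lqnorm q (d i).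
  have h3 := le_trans objle h2.
  rewrite lerD2l in h3.
  exact: h3.
have [a aE] : {a : 'I_n -> R | forall i, a i = l2norm (d i)} by exists (fun i => l2norm (d i)).
have [b bE] : {b : 'I_n -> R | forall i, b i = lqnorm q (d i)} by exists (fun i => lqnorm q (d i)).
have a0 : forall i, 0 <= a i by move=> i; rewrite aE; exact: l2_ge0.
have b0 : forall i, 0 <= b i by move=> i; rewrite bE; exact: lq_ge0.
have Hb' : \sum_(i | i \notin Lam) b i <= \sum_(i in Lam) b i.
  have f1 : \sum_(i | i \notin Lam) b i = \sum_(i | i \notin Lam) lqnorm q (d i).
    by apply: eq_bigr => i _; rewrite bE.
  have f2 : \sum_(i in Lam) b i = \sum_(i in Lam) lqnorm q (d i).
    by apply: eq_bigr => i _; rewrite bE.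
  rewrite [X in X <= _]f1 [X in _ <= X]f2; exact: Hb.
have Ha : forall i, (1 + mu) * a i <= mu * \sum_j a j.
  move=> i.
  have s0 : ip (d i) (\sum_j d j) = 0 by rewrite sumd ip0r.
  rewrite ip_sumr (bigD1 i) //= in s0.
  rewrite (bigD1 i) //=.
  apply: (@nsp_step _ _ _ _ (\sum_(j | j != i) ip (d i) (d j))).
  - exact: a0.
  - by apply: sumr_ge0 => j _; apply: a0.
  - exact: mu0.
  - rewrite aE l2_sq; apply/eqP; rewrite -subr_eq0 opprK; exact/eqP.
  - apply: le_trans (ler_norm _) _; rewrite normrN.
    apply: le_trans (ler_norm_sum _ _ _) _.
    rewrite mulr_sumr; apply: ler_sum => j ji.
    rewrite !aE; apply: (hcohb i j); [by rewrite eq_sym | exact: hdspan | exact: hdspan].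
have T : \sum_j a j = \sum_(i in Lam) a i + \sum_(i | i \notin Lam) a i.
  by rewrite [LHS](bigID (fun i => i \in Lam)).
have HS : (1 + mu) * \sum_(i in Lam) a i <=
          k%:R * mu * (\sum_(i in Lam) a i + \sum_(i | i \notin Lam) a i).
  rewrite -T [X in X <= _]mulr_sumr.
  apply: le_trans (ler_sum _ (fun i _ => Ha i)) _.
  rewrite sumr_const hcard -mulrA mulr_natl.
  exact: lexx.
have Hab : forall i, Num.sqrt (1 - e) * b i <= a i /\ a i <= Num.sqrt (1 + e) * b i.
  move=> i; have [g1 g2] := hE i (c i - c' i).
  rewrite mulmxBr -dE -aE -bE in g1 g2.
  split; [exact: (sqrt_le1 le1 (b0 i) (a0 i) g1) | exact: (sqrt_le2 le2 (b0 i) (a0 i) g2)].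
have H3 : Num.sqrt (1 - e) * \sum_(i in Lam) b i <= \sum_(i in Lam) a i.
  by rewrite mulr_sumr; apply: ler_sum => i _; case: (Hab i).
have H4 : \sum_(i | i \notin Lam) a i <= Num.sqrt (1 + e) * \sum_(i | i \notin Lam) b i.
  by rewrite mulr_sumr; apply: ler_sum => i _; case: (Hab i).
have SC0 : 0 <= \sum_(i | i \notin Lam) a i by apply: sumr_ge0 => i _; apply: a0.
have PC0 : 0 <= \sum_(i | i \notin Lam) b i by apply: sumr_ge0 => i _; apply: b0.
have SCle := final_step K1 mu0 e0 e1 hc2 HS Hb' H3 H4 SC0 PC0.
have SCe : \sum_(i | i \notin Lam) a i = 0 by apply/eqP; rewrite eq_le SCle SC0.
have ai0 := psumr_eq0P (fun i _ => a0 i) SCe (i:=i0) hi0.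
rewrite aE in ai0.
rewrite -(dN i0 hi0); exact: l2_eq0 ai0.
Qed.
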